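(* Let $G$ be a finite $p$-group, let $\Omega_1(Z(G)) = \{g \in Z(G) : g^p = 1\}$, and let $r = \operatorname{rank}(Z(G)) = \operatorname{rank}(\Omega_1(Z(G)))$. (a) Let $\rho_1$ be an irreducible complex representation of $G$ such that $\operatorname{Ker}(\rho_1)$ does not contain $\Omega_1(Z(G))$. Then there are irreducible representations $\rho_2, \dots, \rho_r$ of $G$ such that $\rho_1 \oplus \cdots \oplus \rho_r$ is faithful. In particular, $\operatorname{rdim}(G) \le \dim(\rho_1) + (r-1)\sqrt{[G:Z(G)]}$. (b) If $\Omega_1(Z(G))$ is not contained in $[G,G]$, then $\operatorname{rdim}(G) \le 1 + (r-1)\sqrt{[G:Z(G)]}$.
   Context: $\operatorname{rdim}(G)$ is the minimal dimension of a faithful complex linear representation of $G$. The rank of a finite abelian group is its minimal number of generators. *)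

(* Defs.v *)
From HB Require Import structures.
From mathcomp Require Import all_boot all_order all_algebra all_fingroup all_solvable all_field all_character.
From mathcomp Require Import boolp.
Set Implicit Arguments. Unset Strict Implicit. Unset Printing Implicit Defensive.
Import GRing.Theory Num.Theory.
Local Open Scope ring_scope.

Section Defs.
Variables (gT : finGroupType) (G : {group gT}).

Record rep := Rep { rdeg : nat; rrep : mx_representation algC G rdeg }.

Definition dsum_mx n1 n2 (r1 : mx_representation algC G n1)
  (r2 : mx_representation algC G n2) (x : gT) : 'M[algC]_(n1 + n2) :=
  block_mx (r1 x) 0 0 (r2 x).

Lemma dsum_mx_repr n1 n2 (r1 : mx_representation algC G n1)
  (r2 : mx_representation algC G n2) : mx_repr G (dsum_mx r1 r2).
Proof.
split=> [|x y Gx Gy]; rewrite /dsum_mx.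
  by rewrite !repr_mx1 -scalar_mx_block.
by rewrite mulmx_block !mulmx0 !mul0mx !addr0 !add0r !repr_mxM.
Qed.

Definition dsum_rep (a b : rep) : rep :=
  Rep (MxRepresentation (dsum_mx_repr (rrep a) (rrep b))).

Lemma rep0_repr : mx_repr G (fun _ : gT => (1%:M : 'M[algC]_0)).
Proof. by split=> // x y _ _; rewrite mulmx1. Qed.
Definition rep0 : rep := Rep (MxRepresentation rep0_repr).

Fixpoint dsum_list (s : seq rep) : rep :=
  match s with
  | [::] => rep0
  | [:: a] => a
  | a :: s' => dsum_rep a (dsum_list s')
  end.

Definition has_faithful_rep (n : nat) : bool :=
  `[< exists rG : mx_representation algC G n, mx_faithful rG >].

Lemma has_faithful_rep_ex : exists n, has_faithful_rep n.
Proof.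
exists (gcard G); apply/asboolP; exists (regular_repr algC G).
exact: regular_mx_faithful.
Qed.

Definition rdim : nat := ex_minn has_faithful_rep_ex.

End Defs.

Definition Omega1Z (gT : finGroupType) (G : {group gT}) (p : nat) : {set gT} :=
  [set g in ('Z(G))%g | (g ^+ p == 1)%g].

(* Main.v *)
Require Import Defs.
From HB Require Import structures.
From mathcomp Require Import all_boot all_order all_algebra all_fingroup all_solvable all_field all_character.
Import Order.TTheory GRing.Theory Num.Theory.
Local Open Scope ring_scope.
Section S.
Variables (gT : finGroupType) (G : {group gT}).
Lemma rker_dsum (a b : rep G) x :
  (x \in rker (rrep (dsum_rep a b))) = (x \in rker (rrep a)) && (x \in rker (rrep b)).
Proof.
apply/rkerP/andP => /= [[Gx]|[/rkerP[Gx ea] /rkerP[_ eb]]].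
  rewrite /dsum_mx scalar_mx_block => /eq_block_mx[ea _ _ eb].
  by split; apply/rkerP.
by split=> //; rewrite /dsum_mx ea eb -scalar_mx_block.
Qed.
Lemma rdeg_dsum (a b : rep G) : rdeg (dsum_rep a b) = (rdeg a + rdeg b)%N.
Proof. by []. Qed.
Lemma rker_dsum_list s x :
  (x \in rker (rrep (dsum_list s))) = (x \in G) && all (fun a : rep G => x \in rker (rrep a)) s.
Proof.
elim: s => [|a s IH] /=.
  by rewrite andbT; apply/rkerP/idP => [[]|] //.
case: s IH => [|b s] IH.
  by rewrite andbT; apply/idP/andP => [H|[]//]; split=> //; case/rkerP: H.
rewrite -/(dsum_list (b :: s)) rker_dsum IH.
apply/idP/idP => [/andP[H /andP[-> ->]]|/and3P[Gx H ->]]; rewrite ?H ?Gx ?andbT //; case/rkerP: H.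

Qed.
Lemma rdeg_dsum_list a s : rdeg (dsum_list (a :: s)) = (rdeg a + sumn [seq rdeg b | b : rep G <- s])%N.
Proof.
elim: s a => [|b s IH] a /=; first by rewrite addn0.
by rewrite -/(dsum_list (b :: s)) IH.
Qed.
Lemma sep_lemma (p : nat) : prime p -> forall k (K : {group gT}), (p.-group K)%g -> (logn p #|K| <= k)%N ->
  exists f : 'I_k -> Iirr G, forall x, x \in K -> (forall j, x \in cfker 'chi_(f j)) -> x = 1%g.
Proof.
move=> pr_p; elim=> [|k IH] K pK lK.
  exists (fun _ => 0) => x Kx _.
  have: #|K| = 1%N by rewrite (card_pgroup pK); move: lK; rewrite leqn0 => /eqP ->.
  by move/card1_trivg => K1; move: Kx; rewrite K1 => /set1P.
have [K1|/trivgPn[x Kx ntx]] := eqVneq K 1%G.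
  by exists (fun _ => 0) => y; rewrite K1 => /set1P.
have [i nKi] : exists i, x \notin cfker 'chi[G]_i.
  case: (pickP (fun i => x \notin cfker 'chi[G]_i)) => [i Hi|H]; first by exists i.
  have: x \in \bigcap_i cfker 'chi[G]_i by apply/bigcapP => i _; move: (H i) => /= /negbFE.
  by rewrite TI_cfker_irr => /set1P; move/eqP: ntx.
pose K' := (K :&: cfker 'chi_i)%G.
have pK' : (p.-group K')%g by apply: pgroupS pK; apply: subsetIl.
have prK : K' \proper K.
  by rewrite properE subsetIl /=; apply/subsetPn; exists x => //; rewrite inE Kx.
have lK' : (logn p #|K'| <= k)%N.
  have := proper_card prK; rewrite (card_pgroup pK) (card_pgroup pK').
  rewrite ltn_exp2l ?prime_gt1 // => H; by move: (leq_trans H lK); rewrite pfactorK.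
have [f' Hf'] := IH K' pK' lK'.
exists (fun j => if unlift ord0 j is Some j' then f' j' else i) => y Ky Hy.
apply: Hf' => [|j']; last by move: (Hy (lift ord0 j')); rewrite liftK.
by rewrite inE Ky; move: (Hy ord0); rewrite unlift_none.
Qed.
Lemma Omega1Z_Ohm (p : nat) : (p.-group G)%g -> Omega1Z G p = 'Ohm_1('Z(G))%g.
Proof.
move=> pG; have pZ := pgroupS (center_sub G) pG.
rewrite (OhmEabelian pZ) ?expn1; last exact: abelianS (Ohm_sub 1 _) (center_abelian G).
by apply/setP => x; rewrite !inE.
Qed.
Lemma rank_Z (p : nat) : (p.-group G)%g -> ('m('Z(G)))%g = logn p #|'Ohm_1('Z(G))%g|.
Proof.
move=> pG; have pZ := pgroupS (center_sub G) pG.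
by rewrite grank_abelian ?center_abelian // (rank_abelian_pgroup pZ) ?center_abelian.
Qed.
Lemma chi_rker i : rker 'Chi_i = cfker 'chi[G]_i.
Proof. by rewrite -cfker_repr irrRepr. Qed.

Lemma parta (p : nat) n1 (rho1 : mx_representation algC G n1) : prime p -> (p.-group G)%g ->
  ~~ (Omega1Z G p \subset rker rho1) ->
  exists f : 'I_('m('Z(G)))%g.-1 -> Iirr G,
   mx_faithful (rrep (dsum_list (Rep rho1 :: [seq Rep 'Chi_(f i) | i <- enum 'I_('m('Z(G)))%g.-1]))).
Proof.
move=> pr_p pG nE; rewrite Omega1Z_Ohm // in nE.
have pZ := pgroupS (center_sub G) pG.
set E := 'Ohm_1('Z(G))%G.
have pE : (p.-group E)%g := pgroupS (Ohm_sub 1 _) pZ.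
pose K := (E :&: rker rho1)%G.
have pK : (p.-group K)%g := pgroupS (subsetIl _ _) pE.
have prK : K \proper E.
  by rewrite properE subsetIl /= subsetI subxx.
have lK : (logn p #|K| <= ('m('Z(G)))%g.-1)%N.
  have := proper_card prK; rewrite {1}(card_pgroup pK) {1}(card_pgroup pE).
  rewrite ltn_exp2l ?prime_gt1 // (rank_Z _ pG).
  by case: (logn p #|E|).
have [f Hf] := sep_lemma _ pr_p _ _ pK lK.
exists f; rewrite /mx_faithful.
set R := rker _.
have nR : (R <| G)%g := rker_normal _.
apply/trivgP; apply: (TI_center_nil (pgroup_nil pG) nR).
apply: TI_Ohm1; apply/trivgP/subsetP => y /setIP[Ry Ey].
move: Ry; rewrite /R rker_dsum_list => /andP[Gy /= /andP[Hy1]]; rewrite all_map => /allP Hy.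
apply/set1P; apply: Hf; first by rewrite inE Ey.
move=> j; rewrite -chi_rker.
exact: (Hy _ (mem_enum _ j)).
Qed.
Lemma rdim_le n (rG : mx_representation algC G n) : mx_faithful rG -> (rdim G <= n)%N.
Proof.
move=> ff; rewrite /rdim; case: ex_minnP => m _ Hm; apply: Hm.
by apply/boolp.asboolP; exists rG.
Qed.
Lemma chi_deg_bound i : 'chi[G]_i 1%g <= sqrtC (#|G : 'Z(G)|%g%:R).
Proof.
have g0 := ltW (irr1_gt0 i).
rewrite -(sqrCK g0) ler_sqrtC ?qualifE /= ?exprn_ge0 ?ler0n //.
apply: le_trans (irr1_bound i).1 _; rewrite ler_nat dvdn_leq //.
apply: indexgS => /=; rewrite -(cap_cfcenter_irr G); exact: bigcap_inf.
Qed.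
Lemma bound k n1 (rho1 : mx_representation algC G n1) (f : 'I_k -> Iirr G) :
  mx_faithful (rrep (dsum_list (Rep rho1 :: [seq Rep 'Chi_(f i) | i <- enum 'I_k]))) ->
  ((rdim G)%:R : algC) <= n1%:R + k%:R * sqrtC (#|G : 'Z(G)|%g%:R).
Proof.
move/rdim_le; rewrite rdeg_dsum_list -map_comp /= -(ler_nat algC) => /le_trans; apply.
rewrite natrD lerD2l sumnE big_map natr_sum big_enum /=.
rewrite (eq_bigr (fun i => 'chi_(f i) 1%g)) => [|i _]; last by rewrite irr1_degree.
apply: le_trans (ler_sum _ (fun i _ => chi_deg_bound (f i))) _.
by rewrite sumr_const card_ord mulr_natl.
Qed.
End S.
Theorem lemma3p1 (gT : finGroupType) (G : {group gT}) (p : nat) :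
  prime p -> (p.-group G)%g ->
  let r := ('m('Z(G)))%g in
  (* (a) *)
  (forall (n1 : nat) (rho1 : mx_representation algC G n1),
     mx_irreducible rho1 ->
     ~~ (Omega1Z G p \subset rker rho1) ->
     (exists rhos : 'I_r.-1 -> rep G,
        (forall i, mx_irreducible (rrep (rhos i))) /\
        mx_faithful (rrep (dsum_list (Rep rho1 :: [seq rhos i | i <- enum 'I_r.-1]))))
     /\ ((rdim G)%:R : algC) <= n1%:R + (r.-1)%:R * sqrtC (#|G : 'Z(G)|%g%:R))
  /\
  (* (b) *)
  (~~ (Omega1Z G p \subset (G^`(1))%g) ->
     ((rdim G)%:R : algC) <= 1 + (r.-1)%:R * sqrtC (#|G : 'Z(G)|%g%:R)).
Proof.
move=> pr_p pG r; split.
  move=> n1 rho1 _ nE; have [f ff] := parta _ _ _ _ _ pr_p pG nE.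
  split; last exact: bound _ _ _ _ _ _ ff.
  by exists (fun i => Rep 'Chi_(f i)); split => // i; exact: socle_irr.
move=> /subsetPn[x Ex nGx].
have [i [lin_i nKx]] : exists i, 'chi[G]_i \is a linear_char /\ x \notin cfker 'chi_i.
  case: (pickP (fun i => ('chi[G]_i \is a linear_char) && (x \notin cfker 'chi_i))) => [i /andP[]|H].
    by exists i.
  case/negP: nGx; rewrite -cap_cfker_lin_irr; apply/bigcapP => i li.
  by move: (H i); rewrite li /= => /negbFE.
have nE : ~~ (Omega1Z G p \subset rker 'Chi_i).
  by apply/subsetPn; exists x; rewrite // chi_rker.
have [f ff] := parta _ _ _ _ _ pr_p pG nE.
have := bound _ _ _ _ _ _ ff; rewrite -irr1_degree lin_char1 //.
Qed.
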